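(* Let $k \ge 2$ and $v$ be integers with $v \equiv 1 \pmod{k-1}$ and $v \ge k(k-1)^2 + k$. Then \[ \beta(1,v,k) = \frac{v-1}{k-1}. \]
   Context: For integers $v \ge k \ge 2$, a $(v,k)$-packing is a pair $(X,\mathcal{B})$ where $X$ is a set of $v$ points and $\mathcal{B}$ is a set of $k$-subsets of $X$ (blocks) such that every pair of distinct points lies in at most one block. A partial parallel class (PPC) is a set of pairwise disjoint blocks; its size is the number of blocks. A PPC of size $\rho$ is maximum if the packing has no PPC of size $\rho+1$. $\beta(\rho,v,k)$ denotes the maximum number of blocks in a $(v,k)$-packing in which the maximum PPC has size $\rho$; thus $\beta(1,v,k)$ is the maximum number of blocks in a $(v,k)$-packing with no two disjoint blocks. *)

(* Defs.v *)
From mathcomp Require Import all_boot.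
Set Implicit Arguments. Unset Strict Implicit. Unset Printing Implicit Defensive.

Definition packing (v k : nat) (B : {set {set 'I_v}}) : bool :=
  [forall b in B, #|b| == k] &&
  [forall x : 'I_v, forall y : 'I_v,
     (x != y) ==> (#|[set b in B | (x \in b) && (y \in b)]| <= 1)].

Definition ppc (v : nat) (B P : {set {set 'I_v}}) : bool :=
  (P \subset B) &&
  [forall b1 in P, forall b2 in P, (b1 != b2) ==> [disjoint b1 & b2]].

Definition has_ppc_of_size (v : nat) (B : {set {set 'I_v}}) (r : nat) : bool :=
  [exists P : {set {set 'I_v}}, ppc B P && (#|P| == r)].

Definition max_ppc_size (v : nat) (B : {set {set 'I_v}}) (rho : nat) : bool :=
  has_ppc_of_size B rho && ~~ has_ppc_of_size B rho.+1.

Definition beta (rho v k : nat) : nat :=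
  \max_(B : {set {set 'I_v}} | packing k B && max_ppc_size B rho) #|B|.

(* Main.v *)
Require Import Defs.
From mathcomp Require Import all_boot zify.
Set Implicit Arguments. Unset Strict Implicit. Unset Printing Implicit Defensive.

Lemma sum_ind (T : finType) (A : {set T}) (P : pred T) :
  \sum_(i in A) (P i : nat) = #|[set i in A | P i]|.
Proof.
rewrite (eq_bigr (fun i => if P i then 1 else 0)); last by move=> i _; case: (P i).
rewrite -big_mkcondr sum1_card; apply: eq_card => i; by rewrite !inE.
Qed.

Lemma nodisj v (B : {set {set 'I_v}}) : ~~ has_ppc_of_size B 2 ->
  forall b1 b2, b1 \in B -> b2 \in B -> b1 != b2 -> ~~ [disjoint b1 & b2].
Proof.
move=> H b1 b2 h1 h2 ne; apply/negP => dj; case/negP: H.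
apply/existsP; exists [set b1; b2]; rewrite cards2 ne andbT.
apply/andP; split.
  by apply/subsetP => b; rewrite !inE => /orP[] /eqP ->.
apply/forallP => c1; apply/implyP; rewrite !inE => /orP[] /eqP ->;
apply/forallP => c2; apply/implyP; rewrite !inE => /orP[] /eqP ->;
  rewrite ?eqxx //=; apply/implyP => _; by rewrite // disjoint_sym.
Qed.

Lemma pack_eq v k (B : {set {set 'I_v}}) x y b b' : packing k B -> x != y ->
  b \in B -> b' \in B -> x \in b -> y \in b -> x \in b' -> y \in b' -> b = b'.
Proof.
case/andP=> _ /forallP /(_ x) /forallP /(_ y) /implyP H xy hb hb' xb yb xb' yb'.
move: (H xy) => /card_le1_eqP; apply; by rewrite inE ?hb ?xb ?yb ?hb' ?xb' ?yb'.
Qed.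

Lemma upper_star v d (B : {set {set 'I_v}}) x : packing d.+1 B ->
  (forall b, b \in B -> x \in b) -> #|B| * d <= v.-1.
Proof.
move=> pk Hx.
have E : forall b, b \in B -> #|b :\ x| = d.
  move=> b hb; move: (cardsD1 x b); rewrite Hx //.
  case/andP: pk => /forallP /(_ b) /implyP /(_ hb) /eqP -> _; by move=> [].
have -> : #|B| * d = \sum_(b in B) #|b :\ x|.
  by rewrite (eq_bigr (fun _ => d)) // sum_nat_const.
have -> : \sum_(b in B) #|b :\ x| = \sum_(b in B) \sum_(y in [set~ x]) (y \in b : nat).
  apply: eq_bigr => b _; rewrite sum_ind; apply: eq_card => y; by rewrite !inE andbC.
rewrite exchange_big /=.
have -> : v.-1 = #|[set~ x]| by rewrite cardsC1 card_ord.
rewrite -sum1_card.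
apply: leq_sum => y; rewrite inE => yx.
rewrite sum_ind; apply/card_le1_eqP => b b'; rewrite !inE => /andP[hb yb] /andP[hb' yb'].
rewrite in_set1 in yx; symmetry; exact: (pack_eq pk yx hb hb' yb (Hx b hb) yb' (Hx b' hb')).
Qed.

Lemma meet v (b c : {set 'I_v}) : ~~ [disjoint b & c] -> exists q, q \in b :&: c.
Proof.
move=> H; apply/set0Pn; apply: contra H => /eqP E.
by rewrite -setI_eq0 E.
Qed.

Lemma deg_bound v d (B : {set {set 'I_v}}) p c : packing d.+1 B ->
  (forall b1 b2, b1 \in B -> b2 \in B -> b1 != b2 -> ~~ [disjoint b1 & b2]) ->
  c \in B -> p \notin c -> #|[set b in B | p \in b]| <= d.+1.
Proof.
move=> pk nd hc pc.
pose f b := odflt p [pick q in b :&: c].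
have fP : forall b, b \in B -> p \in b -> f b \in b :&: c.
  move=> b hb pb; have bc : b != c by apply: contraNneq pc => <-.
  case: (meet (nd _ _ hb hc bc)) => q hq.
  rewrite /f; case: pickP => [q' ->//|/(_ q)]; by rewrite hq.
have ck : #|c| = d.+1 by case/andP: pk => /forallP /(_ c) /implyP /(_ hc) /eqP.
rewrite -ck -(card_in_imset (f := f)).
  apply: subset_leq_card; apply/subsetP => q /imsetP [b]; rewrite inE => /andP[hb pb] ->.
  by move: (fP b hb pb); rewrite inE => /andP[].
move=> b b'; rewrite !inE => /andP[hb pb] /andP[hb' pb'] E.
move: (fP b hb pb) (fP b' hb' pb'); rewrite -E !inE => /andP[qb qc] /andP[qb' _].
have pq : p != f b by apply: contraNneq pc => ->.
exact: (pack_eq pk pq hb hb' pb qb pb' qb').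
Qed.

Lemma upper_nonstar v d (B : {set {set 'I_v}}) : packing d.+1 B ->
  (forall b1 b2, b1 \in B -> b2 \in B -> b1 != b2 -> ~~ [disjoint b1 & b2]) ->
  (forall x, exists2 c, c \in B & x \notin c) -> #|B| <= d.+1 * d + 1.
Proof.
move=> pk nd nc.
case: (set_0Vmem B) => [->|[b0 hb0]]; first by rewrite cards0.
have b0k : #|b0| = d.+1 by case/andP: pk => /forallP /(_ b0) /implyP /(_ hb0) /eqP.
rewrite (cardsD1 b0 B) hb0 addnC leq_add2r.
have -> : #|B :\ b0| = \sum_(b in B :\ b0) 1 by rewrite sum1_card.
apply: (@leq_trans (\sum_(b in B :\ b0) \sum_(p in b0) (p \in b : nat))).
  apply: leq_sum => b; rewrite !inE => /andP[bb0 hb].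
  case: (meet (nd _ _ hb hb0 bb0)) => q hq.
  rewrite sum_ind; apply/card_gt0P; exists q; move: hq; rewrite !inE => /andP[-> ->].
  by rewrite andbT.
rewrite exchange_big /=.
apply: (@leq_trans (\sum_(p in b0) d)); last by rewrite sum_nat_const b0k.
apply: leq_sum => p pb0; rewrite sum_ind.
case: (nc p) => c hc pc.
have := deg_bound pk nd hc pc.
rewrite (cardsD1 b0 [set b in B | p \in b]) inE hb0 pb0 add1n ltnS.
move=> H; apply: leq_trans H; apply: subset_leq_card; apply/subsetP => b.
by rewrite !inE andbA.
Qed.

Lemma ar d i z : 0 < d -> i * d < z -> z <= i * d + d -> z.-1 %/ d = i.
Proof.
move=> d0 h1 h2.
have -> : z.-1 = i * d + (z.-1 - i * d) by lia.
rewrite divnMDl // divn_small ?addn0 //; lia.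
Qed.

Section Constr.
Variables n d m : nat.
Hypothesis d0 : 0 < d.
Hypothesis nmd : n = m * d.
Hypothesis m0 : 0 < m.

Definition blk (i : nat) : {set 'I_n.+1} :=
  ord0 |: ((fun j : 'I_d => inord (i * d + j.+1) : 'I_n.+1) @: setT).

Lemma blkP (i : nat) (x : 'I_n.+1) : i < m ->
  (x \in blk i) = (x == ord0) || ((i * d < x) && (x <= i * d + d)).
Proof.
move=> im; rewrite /blk !inE.
have le : i * d + d <= n by rewrite nmd -mulSnr leq_pmul2r.
case: (x =P ord0) => //= _.
apply/imsetP/andP.
  case=> j _ ->; have := ltn_ord j; move=> jd; rewrite inordK; lia.
case=> h1 h2; have jd : x - i * d - 1 < d by lia.
exists (Ordinal jd); first by [].
by apply: val_inj; rewrite /= inordK; lia.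
Qed.

Lemma blk0 i : ord0 \in blk i.
Proof. by rewrite /blk !inE eqxx. Qed.

Lemma blk_card i : i < m -> #|blk i| = d.+1.
Proof.
move=> im; have le : i * d + d <= n by rewrite nmd -mulSnr leq_pmul2r.
rewrite /blk cardsU1 card_imset ?card_ord.
  rewrite cardsT card_ord.
  set S := imset _ _.
  have nS : ord0 \notin S.
    apply/imsetP => -[j _] /(congr1 val); have jd := ltn_ord j.
    rewrite /= inordK; lia.
  by rewrite nS.
move=> j j' /(congr1 val); have jd := ltn_ord j; have jd' := ltn_ord j'.
move=> E; apply: val_inj; move: E; rewrite /= !inordK; lia.
Qed.

Definition B0 : {set {set 'I_n.+1}} := [set blk i | i : 'I_m].

Lemma B0_card : #|B0| = m.
Proof.
rewrite card_imset ?card_ord // => i i' E.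
have im := ltn_ord i; have im' := ltn_ord i'.
have le : i * d + d <= n by rewrite nmd -mulSnr leq_pmul2r.
pose z : 'I_n.+1 := inord (i * d + 1).
have zi : z \in blk i by rewrite blkP // /z inordK; lia.
rewrite E blkP // /z in zi.
case/orP: zi => [/eqP/(congr1 val)|]; rewrite /= inordK; try lia.
move=> /andP[h1 h2]; apply: val_inj; rewrite /=.
have := ar d0 h1 h2; rewrite addn1 /= => <-.
by rewrite mulnC mulKn.
Qed.

Lemma B0_mem b : b \in B0 -> exists2 i, i < m & b = blk i.
Proof. by case/imsetP => i _ ->; exists i. Qed.

Lemma B0_packing : packing d.+1 B0.
Proof.
apply/andP; split.
  apply/forallP => b; apply/implyP => /B0_mem [i im ->]; by rewrite blk_card.
apply/forallP => x; apply/forallP => y; apply/implyP => xy.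
apply/card_le1_eqP => b b'; rewrite !inE.
move=> /andP[/B0_mem [i im ->] /andP[xb yb]] /andP[/B0_mem [i' im' ->] /andP[xb' yb']].
suff : i = i' by move=> ->.
have [z [zb zb' z0]] : exists z, [/\ z \in blk i, z \in blk i' & z != ord0].
  case: (x =P ord0) => [ex|/eqP nx]; last by exists x.
  exists y; split => //; by rewrite -ex eq_sym.
move: zb zb'; rewrite !blkP // (negbTE z0) /= => /andP[h1 h2] /andP[h1' h2'].
by rewrite -(ar d0 h1 h2) -(ar d0 h1' h2').
Qed.

Lemma B0_max : max_ppc_size B0 1.
Proof.
apply/andP; split.
  apply/existsP; exists [set blk 0]; rewrite cards1 eqxx andbT.
  apply/andP; split.
    rewrite sub1set; apply/imsetP; by exists (Ordinal m0).
  apply/forallP => b1; apply/implyP; rewrite inE => /eqP ->.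
  apply/forallP => b2; apply/implyP; rewrite inE => /eqP ->; by rewrite eqxx.
apply/negP => /existsP [P /andP[/andP[sP /forallP dj] /cards2P [b1 [b2 [ne EP]]]]].
have h1 : b1 \in P by rewrite EP !inE eqxx.
have h2 : b2 \in P by rewrite EP !inE eqxx orbT.
move: (dj b1) => /implyP /(_ h1) /forallP /(_ b2) /implyP /(_ h2) /implyP /(_ ne) /disjoint_setI0.
move: (subsetP sP _ h1) (subsetP sP _ h2) => /B0_mem [i _ ->] /B0_mem [i' _ ->] E.
have : ord0 \in blk i :&: blk i' by rewrite inE !blk0.
by rewrite E inE.
Qed.

End Constr.

Theorem theorem5p5 (k v : nat) :
  2 <= k ->
  v = 1 %[mod k - 1] ->
  k * (k - 1) ^ 2 + k <= v ->
  beta 1 v k = (v - 1) %/ (k - 1).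
Proof.
move=> hk hmod hv.
case: k hk hmod hv => [//|d] hk hmod hv.
have d0 : 0 < d by [].
rewrite subn1 /= in hmod hv *.
case: v hmod hv => [|n] hmod hv; first by move: hv; rewrite addnS.
rewrite subn1 /=.
have dn : d %| n.
  by move/eqP: hmod; rewrite eqn_mod_dvd // subn1.
set m := n %/ d.
have nmd : n = m * d by rewrite divnK.
have mb : d.+1 * d + 1 <= m.
  rewrite -(leq_pmul2r d0) -nmd; move: hv; rewrite expnS expn1; nia.
have m0 : 0 < m by lia.
rewrite /beta; apply/eqP; rewrite eqn_leq; apply/andP; split.
  apply/bigmax_leqP => B /andP[pk /andP[_ n2]].
  have nd := nodisj n2.
  case: (boolP [exists x, [forall b in B, x \in b]]) => [/existsP [x /forallP Hx]|nx].
    rewrite -(leq_pmul2r d0) -nmd.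
    apply: (upper_star pk) => b hb; exact: (implyP (Hx b) hb).
  apply: leq_trans mb; apply: upper_nonstar pk nd _ => x.
  move: nx; rewrite negb_exists => /forallP /(_ x); rewrite negb_forall => /existsP [c].
  rewrite negb_imply => /andP[hc xc]; by exists c.
rewrite -{1}(B0_card d0 nmd m0).
apply: (leq_bigmax_cond (B0 n d m)).
by rewrite B0_packing // B0_max.
Qed.
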